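(* If $f_0,f_1,\dots,f_t\in F\langle X\rangle$ are $M_n$-locally linearly dependent while $f_1,\dots,f_t$ are $M_n$-locally linearly independent, then there exist central polynomials $c_0,c_1,\dots,c_t$ of $M_n$ such that $c_0$ is not a polynomial identity of $M_n$ and $\sum_{i=0}^tc_if_i$ is a polynomial identity of $M_n$.
   Context: $F$ is a field of characteristic $0$, $M_n=M_n(F)$, $F\langle X\rangle$ the free algebra on noncommuting $X=\{x_1,x_2,\dots\}$. Polynomials $f_1,\dots,f_t\in F\langle x_1,\dots,x_m\rangle$ are $M_n$-locally linearly dependent if $f_1(r_1,\dots,r_m),\dots,f_t(r_1,\dots,r_m)$ are linearly dependent over $F$ for all $r_1,\dots,r_m\in M_n$, and $M_n$-locally linearly independent otherwise. A central polynomial of $M_n$ is an element of $F\langle X\rangle$ all of whose evaluations in $M_n$ are scalar matrices; a polynomial identity is one all of whose evaluations are $0$. *)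

(* Defs.v *)
From HB Require Import structures.
From mathcomp Require Import all_boot all_order all_algebra.
Set Implicit Arguments. Unset Strict Implicit. Unset Printing Implicit Defensive.
Import Order.TTheory GRing.Theory Num.Theory.
Local Open Scope ring_scope.

(* Noncommutative polynomials in the free algebra F<x_0, x_1, ...>,
   represented as formal finite sums of monomials: a list of pairs
   (coefficient, word), a word being the list of indices of the variables. *)
Definition ncpoly (F : Type) := seq (F * seq nat).

Definition ncadd (F : Type) (p q : ncpoly F) : ncpoly F := p ++ q.

Definition ncmul (F : pzRingType) (p q : ncpoly F) : ncpoly F :=
  [seq (m.1 * m'.1, m.2 ++ m'.2) | m <- p, m' <- q].

Definition ncsum (F : Type) (k : nat) (g : 'I_k -> ncpoly F) : ncpoly F :=
  flatten [seq g i | i <- enum 'I_k].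

Definition ncword_eval (F : pzRingType) (n : nat) (r : nat -> 'M[F]_n)
  (w : seq nat) : 'M[F]_n := \prod_(j <- w) r j.

Definition nceval (F : pzRingType) (n : nat) (r : nat -> 'M[F]_n)
  (p : ncpoly F) : 'M[F]_n := \sum_(m <- p) m.1 *: ncword_eval r m.2.

Definition loc_lin_dep (F : fieldType) (n k : nat) (g : 'I_k -> ncpoly F) :=
  forall r : nat -> 'M[F]_n,
    exists a : 'I_k -> F, (exists i, a i != 0) /\
      \sum_(i < k) a i *: nceval r (g i) = 0.

Definition loc_lin_indep (F : fieldType) (n k : nat) (g : 'I_k -> ncpoly F) :=
  ~ loc_lin_dep n g.

Definition central_poly (F : fieldType) (n : nat) (c : ncpoly F) :=
  forall r : nat -> 'M[F]_n, is_scalar_mx (nceval r c).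

Definition poly_identity (F : fieldType) (n : nat) (c : ncpoly F) :=
  forall r : nat -> 'M[F]_n, nceval r c = 0.

(* Main.v *)
Require Import Defs.
From HB Require Import structures.
From mathcomp Require Import all_boot all_order all_fingroup all_algebra.
From Stdlib Require Import Classical.
Import GRing.Theory.
Local Open Scope ring_scope.

Module Helpers.
Set Implicit Arguments. Unset Strict Implicit. Unset Printing Implicit Defensive.

Section Eval.
Variables (F : fieldType) (n : nat).
Implicit Types (r : nat -> 'M[F]_n) (p q : ncpoly F).

Lemma ncword_eval_cat r w w' :
  ncword_eval r (w ++ w') = ncword_eval r w * ncword_eval r w'.
Proof. by rewrite /ncword_eval big_cat. Qed.

Lemma nceval_cat r p q : nceval r (p ++ q) = nceval r p + nceval r q.
Proof. by rewrite /nceval big_cat. Qed.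

Lemma nceval_mul r p q : nceval r (ncmul p q) = nceval r p * nceval r q.
Proof.
rewrite /nceval /ncmul big_allpairs_dep mulr_suml; apply: eq_bigr => m _.
rewrite mulr_sumr; apply: eq_bigr => m' _ /=.
by rewrite ncword_eval_cat -!mulmxE -scalemxAl -scalemxAr scalerA.
Qed.

Lemma nceval_sum r k (g : 'I_k -> ncpoly F) :
  nceval r (ncsum g) = \sum_i nceval r (g i).
Proof. by rewrite /ncsum /nceval big_flatten /= big_map big_enum. Qed.

Definition ncscale (a : F) p : ncpoly F := [seq (a * m.1, m.2) | m <- p].
Lemma nceval_scale r a p : nceval r (ncscale a p) = a *: nceval r p.
Proof.
rewrite /nceval big_map scaler_sumr; apply: eq_bigr => m _ /=.
by rewrite scalerA.
Qed.

Definition ncone : ncpoly F := [:: (1, [::])].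
Lemma nceval_one r : nceval r ncone = 1.
Proof. by rewrite /nceval big_seq1 /ncword_eval big_nil scale1r. Qed.

Definition ncvar (j : nat) : ncpoly F := [:: (1, [:: j])].
Lemma nceval_var r j : nceval r (ncvar j) = r j.
Proof. by rewrite /nceval big_seq1 /ncword_eval big_seq1 scale1r. Qed.

Definition ncprod (l : seq (ncpoly F)) := foldr (@ncmul F) ncone l.
Lemma nceval_prod r l : nceval r (ncprod l) = \prod_(q <- l) nceval r q.
Proof.
elim: l => [|q l IH] /=; first by rewrite big_nil nceval_one.
by rewrite nceval_mul IH big_cons.
Qed.

Definition ncsubst (s : nat -> ncpoly F) p : ncpoly F :=
  flatten [seq ncscale m.1 (ncprod [seq s j | j <- m.2]) | m <- p].

Lemma nceval_subst r s p :
  nceval r (ncsubst s p) = nceval (fun j => nceval r (s j)) p.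
Proof.
elim: p => [|m p IH]; first by rewrite /nceval !big_nil.
rewrite /ncsubst /= nceval_cat -/(ncsubst s p) IH /nceval big_cons.
congr (_ + _); rewrite -/(nceval _ _) nceval_scale nceval_prod big_map.
by [].
Qed.

Lemma nceval_ext r r' p :
  (forall m, m \in p -> forall j, j \in m.2 -> r j = r' j) ->
  nceval r p = nceval r' p.
Proof.
move=> H; rewrite /nceval big_seq [RHS]big_seq.
apply: eq_bigr => m mp; congr (_ *: _).
rewrite /ncword_eval big_seq [RHS]big_seq.
by apply: eq_bigr => j jm; exact: H mp j jm.
Qed.

End Eval.


Section Cap.
Variables (F : fieldType) (m : nat).
Local Notation n := m.+1.
Local Notation N := (n * n)%N.
Local Notation MM := 'M[F]_n.

Definition coordm (x : nat -> MM) : 'M[F]_N := \matrix_(k < N, e < N) mxvec (x k) 0 e.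
Definition Eb (e : 'I_N) : MM := vec_mx (delta_mx 0 e).

Lemma decomp (X : MM) : X = \sum_e mxvec X 0 e *: Eb e.
Proof.
rewrite -{1}(mxvecK X) {1}(matrix_sum_delta (mxvec X)) big_ord1 linear_sum.
by apply: eq_bigr => e _; rewrite linearZ.
Qed.

Definition sg (s : 'S_N) (j : nat) : nat := s (inord j).
Definition fac (s : 'S_N) (x y : nat -> MM) j := x (sg s j) * y j.+1.
Definition capfun (x y : nat -> MM) : MM :=
  \sum_(s : 'S_N) ((-1) ^+ s : F) *: (y 0%N * \prod_(0 <= j < N) fac s x y j).

Definition Gm (g : {ffun 'I_N -> 'I_N}) : 'M[F]_N := \matrix_(i, e) ((g i == e)%:R).
Definition Qcap (y : nat -> MM) : MM :=
  \sum_(g : {ffun 'I_N -> 'I_N}) \det (Gm g) *: (y 0%N * \prod_(j < N) (Eb (g j) * y j.+1)).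

Lemma capfun_det x y : capfun x y = \det (coordm x) *: Qcap y.
Proof.
pose C := coordm x.
have E1 s : \prod_(0 <= j < N) fac s x y j =
   \sum_(g : {ffun 'I_N -> 'I_N}) (\prod_(j < N) C (s j) (g j)) *:
           \prod_(j < N) (Eb (g j) * y j.+1).
  rewrite big_mkord.
  have -> : \prod_(j < N) fac s x y j =
      \prod_(j < N) \sum_(e < N) C (s j) e *: (Eb e * y j.+1).
    apply: eq_bigr => j _; rewrite /fac /sg inord_val (decomp (x (s j))) mulr_suml.
    by apply: eq_bigr => e _; rewrite /C mxE -!mulmxE scalemxAl.
  rewrite bigA_distr_bigA; apply: eq_bigr => g _.
  by rewrite scaler_prod.
rewrite /capfun /Qcap.
under eq_bigr do rewrite E1 mulr_sumr scaler_sumr.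
rewrite exchange_big scaler_sumr; apply: eq_bigr => g _.
have -> : \det (coordm x) *: (\det (Gm g) *: (y 0%N * \prod_(j < N) (Eb (g j) * y j.+1)))
   = (\sum_(s : 'S_N) (-1) ^+ s * \prod_(j < N) C (s j) (g j)) *:
       (y 0%N * \prod_(j < N) (Eb (g j) * y j.+1)).
  rewrite scalerA; congr (_ *: _).
  rewrite -(det_tr (coordm x)) mulrC -det_mulmx /(\det _); apply: eq_bigr => s _.
  congr (_ * _); apply: eq_bigr => i _.
  rewrite !mxE (bigD1 (g i)) //= big1 ?addr0 ?mxE ?eqxx ?mul1r //.
  by move=> e /negbTE ne; rewrite mxE eq_sym ne mul0r.
rewrite scaler_suml; apply: eq_bigr => s _.
by rewrite -scalerA -scalerAr.
Qed.

End Cap.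


Section Lin.
Variables (F : fieldType).

Definition rowupd p (C : 'M[F]_p) (i : 'I_p) (v : 'rV[F]_p) : 'M[F]_p :=
  \matrix_(k, j) if k == i then v 0 j else C k j.

Lemma det_rowupd p (C : 'M[F]_p) i v :
  \det (rowupd C i v) = \sum_j v 0 j * cofactor C i j.
Proof.
rewrite (expand_det_row _ i); apply: eq_bigr => j _; rewrite mxE eqxx.
congr (_ * _); rewrite /cofactor; congr (_ * \det _).
by apply/matrixP => a b; rewrite !mxE eq_sym (negbTE (neq_lift _ _)).
Qed.

Lemma det_deriv p (C L : 'M[F]_p) :
  \sum_i \det (rowupd C i (row i C *m L)) = \tr L * \det C.
Proof.
have -> : \sum_i \det (rowupd C i (row i C *m L)) = \tr ((C *m L) *m \adj C).
  rewrite /mxtrace; apply: eq_bigr => i _; rewrite det_rowupd mxE.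
  by apply: eq_bigr => j _; rewrite -row_mul mxE [\adj C j i]mxE.
by rewrite mxtrace_mulC mulmxA mul_adj_mx mul_scalar_mx mxtraceZ mulrC.
Qed.

Lemma trace_char p (A : 'M[F]_p) c :
  (forall Z : 'M[F]_p, \tr (Z *m A) = \tr Z * c) -> A = c%:M.
Proof.
move=> H; apply/matrixP => a b; have := H (delta_mx b a).
rewrite /mxtrace (bigD1 b) //= big1 ?addr0; last first.
  by move=> k /negbTE kb; rewrite mxE big1 // => l _; rewrite mxE kb mul0r.
rewrite mxE (bigD1 a) //= big1 ?addr0; last first.
  by move=> l /negbTE la; rewrite mxE la andbF mul0r.
rewrite !mxE !eqxx mul1r => ->.
rewrite (bigD1 b) //= big1 ?addr0; last first.
  by move=> k /negbTE kb; rewrite mxE kb.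
rewrite mxE eqxx /= eq_sym.
by case: (a == b); rewrite ?mul1r ?mul0r.
Qed.

End Lin.


Section K.
Variables (F : fieldType) (m : nat).
Local Notation n := m.+1.
Local Notation N := (n * n)%N.
Local Notation MM := 'M[F]_n.

Definition upd (x : nat -> MM) (i : nat) (Z : MM) : nat -> MM :=
  fun k => if k == i then Z * x k else x k.

Lemma coordm_upd x (i : 'I_N) Z :
  coordm (upd x i Z) = rowupd (coordm x) i (row i (coordm x) *m lin_mx (mulmx Z)).
Proof.
apply/matrixP => k j; rewrite [LHS]mxE [RHS]mxE /upd.
case: (k =P i) => [->|]; rewrite ?eqxx //.
  have -> : row i (coordm x) = mxvec (x i) by apply/rowP => e; rewrite !mxE.
  by rewrite mul_vec_lin.
move=> /eqP ki; have kn : (k == i :> nat) = false by apply/negbTE; rewrite val_eqE.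
by rewrite kn mxE.
Qed.

Lemma tr_lin_mul (Z : MM) : \tr (lin_mx (@mulmx F n n n Z)) = n%:R * \tr Z.
Proof.
rewrite /mxtrace (reindex _ (curry_mxvec_bij _ _)) /=.
transitivity (\sum_(a < n) \sum_(b < n)
   lin_mx (@mulmx F n n n Z) (mxvec_index a b) (mxvec_index a b)).
  by rewrite pair_big; apply: eq_bigr => [[a b]] _.
rewrite mulr_natl -sumrMnl; apply: eq_bigr => a _.
have -> : Z a a *+ n = \sum_(b < n) Z a a by rewrite sumr_const card_ord.
apply: eq_bigr => b _.
rewrite mxE /= vec_mx_delta mxvecE mxE (bigD1 a) //= big1 ?addr0; last first.
  by move=> l /negbTE la; rewrite mxE la mulr0.
by rewrite mxE !eqxx mulr1.
Qed.

Definition Ffun (x y : nat -> MM) (Z : MM) : MM :=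
  \sum_(s : 'S_N) \sum_(k < N) ((-1) ^+ s : F) *:
    ((y 0%N * \prod_(0 <= j < k) fac s x y j) * Z * \prod_(k <= j < N) fac s x y j).

Definition Kfun (x y : nat -> MM) (W : MM) : MM :=
  \sum_(s : 'S_N) \sum_(k < N) ((-1) ^+ s : F) *:
    (\prod_(k <= j < N) fac s x y j * W * (y 0%N * \prod_(0 <= j < k) fac s x y j)).

Lemma tr_KF x y Z W : \tr (Z *m Kfun x y W) = \tr (Ffun x y Z *m W).
Proof.
rewrite /Kfun /Ffun mulmx_sumr mulmx_suml !raddf_sum; apply: eq_bigr => s _.
rewrite mulmx_sumr mulmx_suml !raddf_sum; apply: eq_bigr => k _.
rewrite /= -scalemxAr -scalemxAl !mxtraceZ; congr (_ * _).
move: (y 0%N * _) (\prod_(k <= j < N) _) => A B.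
rewrite -!mulmxE !mulmxA mxtrace_mulC !mulmxA.
by [].
Qed.


Lemma Ffun_upd x y Z : Ffun x y Z = \sum_(i < N) capfun (upd x i Z) y.
Proof.
rewrite /capfun exchange_big /Ffun; apply: eq_bigr => s _.
rewrite [RHS](reindex_inj (@perm_inj _ s)) /=.
apply: eq_bigr => k _; congr (_ *: _).
have sgk : forall j, (j < N)%N -> (sg s j == s k :> nat) = (j == k).
  move=> j jN; rewrite /sg val_eqE (inj_eq (@perm_inj _ s)).
  by rewrite -(inj_eq val_inj) /= inordK.
rewrite [in RHS](big_cat_nat (n:=k)) //=; last exact: ltnW (ltn_ord k).
rewrite [X in _ = _ * (_ * X)](big_ltn (ltn_ord k)).
have -> : \prod_(0 <= j < k) fac s (upd x (s k) Z) y j = \prod_(0 <= j < k) fac s x y j.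
  apply: eq_big_nat => j /andP[_ jk]; rewrite /fac /upd.
  by rewrite sgk ?(ltn_trans jk) // (ltn_eqF jk).
have -> : \prod_(k.+1 <= j < N) fac s (upd x (s k) Z) y j = \prod_(k.+1 <= j < N) fac s x y j.
  apply: eq_big_nat => j /andP[kj jN]; rewrite /fac /upd.
  by rewrite sgk // (gtn_eqF kj).
rewrite [in LHS](big_ltn (ltn_ord k)) /fac /upd sgk // eqxx.
have -> : sg s k = s k by rewrite /sg inord_val.
by rewrite !mulrA.
Qed.

Lemma Kfun_scalar x y W :
  Kfun x y W = (n%:R * \det (coordm x) * \tr (Qcap y *m W))%:M.
Proof.
apply: trace_char => Z; rewrite tr_KF Ffun_upd.
under eq_bigr do rewrite capfun_det coordm_upd.
rewrite -scaler_suml -scalemxAl mxtraceZ det_deriv tr_lin_mul.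
by rewrite !mulrA [_ * \tr Z]mulrC.
Qed.

End K.


Section Units.
Variables (F : fieldType) (m : nat).
Local Notation n := m.+1.
Local Notation N := (n * n)%N.
Local Notation MM := 'M[F]_n.

Definition pi (j : nat) : 'I_n * 'I_n :=
  enum_val (cast_ord (esym (mxvec_cast n n)) (inord j)).

Lemma pi_index j : (j < N)%N -> mxvec_index (pi j).1 (pi j).2 = inord j.
Proof.
move=> jN; rewrite /mxvec_index -surjective_pairing /pi enum_valK.
by rewrite cast_ordKV.
Qed.

Lemma pi_inj j j' : (j < N)%N -> (j' < N)%N -> (pi j == pi j') = (j == j').
Proof.
move=> jN j'N; apply/eqP/eqP => [e|->] //.
have := pi_index jN; rewrite e pi_index // => /(congr1 val).
by rewrite /= !inordK.
Qed.

Definition Ex (k : nat) : MM := @Eb F m (inord k).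

Lemma Ex_delta j : (j < N)%N -> Ex j = delta_mx (pi j).1 (pi j).2.
Proof. by move=> jN; rewrite /Ex /Eb -pi_index // vec_mx_delta. Qed.

Lemma coordm_Ex : coordm Ex = 1%:M.
Proof.
apply/matrixP => k e; rewrite !mxE /Ex /Eb vec_mxK inord_val mxE eqxx /=.
by rewrite eq_sym.
Qed.


Definition rowi (j : nat) : 'I_n := if j is j'.+1 then (pi j').2 else ord0.
Definition coli (j : nat) : 'I_n := if (j < N)%N then (pi j).1 else ord0.
Definition ystar (j : nat) : MM := delta_mx (rowi j) (coli j).

Lemma sg_lt (s : 'S_N) j : (sg s j < N)%N.
Proof. by rewrite /sg ltn_ord. Qed.

Lemma prefix_val (s : 'S_N) k : (k <= N)%N ->
  ystar 0 * \prod_(0 <= j < k) fac s Ex ystar j =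
  if all (fun j => sg s j == j) (iota 0 k) then delta_mx ord0 (coli k) else 0.
Proof.
elim: k => [|k IH] kN; first by rewrite big_nil mulr1.
have -> : iota 0 k.+1 = iota 0 k ++ [:: k] by rewrite -addn1 iotaD.
rewrite all_cat /= andbT.
rewrite big_nat_recr // mulrA IH ?(ltnW kN) //.
case: (all _ _); last by rewrite mul0r.
rewrite /fac Ex_delta ?sg_lt // /ystar /= /coli kN.
set c := (if _ then _ else _).
have key : (sg s k == k) = ((pi k).1 == (pi (sg s k)).1) && ((pi (sg s k)).2 == (pi k).2).
  rewrite -(pi_inj (sg_lt s k) kN) [pi (sg s k)]surjective_pairing.
  by case: (pi k) => a b; rewrite /= xpair_eqE eq_sym.
rewrite key -!mulmxE mulmxA mul_delta_mx_cond.
case: (_ == _); last by rewrite mulr0n mul0mx.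
by rewrite mulr1n mul_delta_mx_cond; case: (_ == _).
Qed.

Lemma capfun_Ex : capfun Ex ystar = delta_mx ord0 ord0.
Proof.
rewrite /capfun (bigD1 (1%g : 'S_N)) //= [X in _ + X]big1 ?addr0; last first.
  move=> s s1; rewrite prefix_val //.
  case: ifP => [/allP H|]; last by rewrite scaler0.
  case/eqP: s1; apply/permP => i; rewrite perm1.
  have /H : (val i \in iota 0 N) by rewrite mem_iota /= ltn_ord.
  by rewrite /sg inord_val => /eqP /val_inj.
rewrite prefix_val // odd_perm1 expr0 scale1r.
have -> : all (fun j => sg (1%g : 'S_N) j == j) (iota 0 N).
  apply/allP => j; rewrite mem_iota /= => jN.
  by rewrite /sg perm1 inordK.
by rewrite /coli ltnn.
Qed.

Lemma Qcap_star : Qcap ystar = delta_mx ord0 ord0.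
Proof.
by rewrite -capfun_Ex capfun_det coordm_Ex det1 scale1r.
Qed.

End Units.


Section KP.
Variables (F : fieldType) (m : nat).
Local Notation n := m.+1.
Local Notation N := (n * n)%N.
Local Notation MM := 'M[F]_n.

Definition xyw (s : 'S_N) (l : seq nat) : seq nat :=
  flatten [seq [:: sg s j; (N + j.+1)%N] | j <- l].

Definition kword (s : 'S_N) (k : 'I_N) : seq nat :=
  xyw s (index_iota k N) ++ [:: (N + N.+1)%N] ++ ((N + 0)%N :: xyw s (index_iota 0 k)).

Definition Kpoly : ncpoly F :=
  [seq (((-1) ^+ s : F), kword s k) | s : 'S_N <- index_enum 'S_N, k : 'I_N <- index_enum 'I_N].

Lemma eval_xyw (r : nat -> MM) s l :
  ncword_eval r (xyw s l) = \prod_(j <- l) fac s r (fun j => r (N + j)%N) j.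
Proof.
elim: l => [|j l IH]; first by rewrite /xyw /= /ncword_eval !big_nil.
have -> : xyw s (j :: l) = [:: sg s j; (N + j.+1)%N] ++ xyw s l by [].
rewrite ncword_eval_cat IH big_cons; congr (_ * _).
by rewrite /ncword_eval big_cons big_seq1.
Qed.

Lemma eval_Kpoly (r : nat -> MM) :
  nceval r Kpoly = Kfun r (fun j => r (N + j)%N) (r (N + N.+1)%N).
Proof.
rewrite /nceval /Kpoly big_allpairs_dep /Kfun; apply: eq_bigr => s _.
apply: eq_bigr => k _ /=; congr (_ *: _).
rewrite /kword !ncword_eval_cat !eval_xyw.
rewrite /ncword_eval big_seq1 big_cons -/(ncword_eval r _) eval_xyw.
by rewrite mulrA.
Qed.

End KP.


Section Cramer.
Variable F : fieldType.

Lemma sum_widen p t (tp : (t <= p)%N) (G : 'I_p -> 'M[F]_(1, p)) :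
  \sum_(i < t) G (widen_ord tp i) = \sum_(j < p | (j < t)%N) G j.
Proof. by rewrite big_ord_narrow. Qed.

Lemma cramer_zero p t (tp : (t <= p)%N) (A0 : 'M[F]_p) (u0 : 'rV[F]_p)
    (mu : 'I_t.+1 -> F) :
  (exists i, mu i != 0) ->
  mu ord0 *: u0 + \sum_(i < t) mu (lift ord0 i) *: row (widen_ord tp i) A0 = 0 ->
  \det A0 *: u0 -
    \sum_(i < t) \det (rowupd A0 (widen_ord tp i) u0) *: row (widen_ord tp i) A0 = 0.
Proof.
move=> [i0 nz0] dep.
pose v := u0 *m \adj A0.
have dv j : \det (rowupd A0 j u0) = v 0 j.
  rewrite det_rowupd mxE; apply: eq_bigr => e _; by rewrite [\adj A0 e j]mxE.
have tot : \det A0 *: u0 = \sum_j v 0 j *: row j A0.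
  by rewrite -mulmx_sum_row /v -mulmxA mul_adj_mx mul_mx_scalar.
under eq_bigr do rewrite dv.
rewrite tot (sum_widen tp (fun j => v 0 j *: row j A0)).
rewrite (bigID (fun j : 'I_p => (j < t)%N)) /= addrAC subrr add0r.
apply: big1 => j jt; rewrite -dv.
suff /eqP -> : \det (rowupd A0 j u0) == 0 by rewrite scale0r.
pose w : 'rV[F]_p := \row_k (if k == j then mu ord0
                            else if (k < t)%N then mu (inord k.+1) else 0).
apply/det0P; exists w.
  case: (unliftP ord0 i0) => [i' ->|->] in nz0.
  - apply/eqP => /rowP /(_ (widen_ord tp i')); rewrite !mxE.
    have -> : (widen_ord tp i' == j) = false.
      by apply/negbTE; apply: contra jt => /eqP <-; exact: (ltn_ord i').
    have E : inord (widen_ord tp i').+1 = lift ord0 i' :> 'I_t.+1.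
      by apply: val_inj; rewrite /= inordK // ltnS; exact: ltn_ord i'.
    by rewrite /= (ltn_ord i') E => /eqP; apply/negP.
  - by apply/eqP => /rowP /(_ j); rewrite !mxE eqxx; apply/eqP.
rewrite mulmx_sum_row (bigD1 j) //= !mxE eqxx.
have -> : row j (rowupd A0 j u0) = u0 by apply/rowP => e; rewrite !mxE eqxx.
rewrite -[RHS]dep; congr (_ + _).
have -> : \sum_(i < t) mu (lift ord0 i) *: row (widen_ord tp i) A0 =
    \sum_(k < p | (k < t)%N) w 0 k *: row k A0.
  rewrite (big_ord_narrow (F := fun k => w 0 k *: row k A0) tp) /=.
  apply: eq_bigr => i _ /=; rewrite !mxE.
  have -> : (widen_ord tp i == j) = false.
    by apply/negbTE; apply: contra jt => /eqP <-; exact: (ltn_ord i).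
  rewrite /= (ltn_ord i); congr (mu _ *: _).
  by apply: val_inj; rewrite /= inordK // ltnS; exact: ltn_ord i.
rewrite (bigID (fun k : 'I_p => (k < t)%N)) /= [X in _ + X]big1 ?addr0; last first.
  move=> k /andP[kj kt]; rewrite !mxE (negbTE kj) (negbTE kt) scale0r.
  by [].
apply: eq_big => [k|k /andP[kj kt]].
  by case: (k =P j) => [->|]; rewrite ?(negbTE jt) ?andbF ?andbT //.
rewrite !mxE (negbTE kj) kt; congr (_ *: _).
by apply/rowP => e; rewrite !mxE (negbTE kj).
Qed.


Lemma completion t p (tp : (t <= p)%N) (U : 'M[F]_(t, p)) (R : 'I_p -> 'rV[F]_p) :
  row_free U ->
  (forall i : 'I_t, R (widen_ord tp i) = row i U) ->
  (forall k : 'I_p, ~~ (k < t)%N -> R k = row k (row_ebase U)) ->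
  \det (\matrix_(k < p) R k) != 0.
Proof.
move=> rfU RU RE; apply/det0P => -[v nzv vA]; case/eqP: nzv.
pose E := row_ebase U; pose L := col_ebase U.
have rU : \rank U = t by apply/eqP.
have dU : U = L *m pid_mx t *m E by rewrite -{1}(mulmx_ebase U) rU.
pose v1 : 'rV[F]_t := \row_i v 0 (widen_ord tp i).
pose v2 : 'rV[F]_p := \row_k (if (k < t)%N then 0 else v 0 k).
have key : (v1 *m L *m pid_mx t + v2) *m E = 0.
  rewrite -vA mulmxDl -!mulmxA (mulmxA L) -dU !mulmx_sum_row.
  rewrite [RHS](bigID (fun k : 'I_p => (k < t)%N)) /=; congr (_ + _).
    rewrite (big_ord_narrow (F := fun k => v 0 k *: row k (\matrix_(k < p) R k)) tp) /=.
    by apply: eq_bigr => i _; rewrite !mxE rowK RU.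
  rewrite (bigID (fun k : 'I_p => (k < t)%N)) /= big1 ?add0r; last first.
    by move=> k kt; rewrite mxE kt scale0r.
  by apply: eq_bigr => k kt; rewrite mxE (negbTE kt) rowK RE.
have Eunit : row_free E by rewrite row_free_unit row_ebase_unit.
have {key} key : v1 *m L *m pid_mx t + v2 = 0.
  by apply: (row_free_inj Eunit); rewrite key mul0mx.
have pid1 (X : 'rV[F]_t) (i : 'I_t) : (X *m pid_mx t) 0 (widen_ord tp i) = X 0 i.
  rewrite mxE (bigD1 i) //= big1 ?addr0; last first.
    by move=> l li; rewrite -(inj_eq val_inj) /= in li; rewrite mxE /= (negbTE li) mulr0.
  by rewrite mxE /= eqxx ltn_ord mulr1.
have pid2 (X : 'rV[F]_t) (k : 'I_p) : ~~ (k < t)%N -> (X *m pid_mx t) 0 k = 0.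
  move=> kt; rewrite mxE big1 // => l _; rewrite mxE.
  case: eqP => [e|]; last by rewrite mulr0.
  by case/negP: kt; rewrite -e ltn_ord.
have v2z (k : 'I_p) : ~~ (k < t)%N -> v 0 k = 0.
  move=> kt; have /rowP /(_ k) := key; rewrite !mxE.
  have := pid2 (v1 *m L) k kt; rewrite mxE => ->.
  by rewrite (negbTE kt) add0r.
have Lunit : row_free L by rewrite row_free_unit col_ebase_unit.
have v1z : v1 = 0.
  apply: (row_free_inj Lunit); rewrite mul0mx; apply/rowP => i.
  have /rowP /(_ (widen_ord tp i)) := key; rewrite mxE [X in X + _ = _]pid1.
  by rewrite [v2 _ _]mxE /= (ltn_ord i) addr0 !mxE.
apply/rowP => k; rewrite mxE.
case: (boolP (k < t)%N) => kt; last exact: v2z.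
have /rowP /(_ (Ordinal kt)) := v1z; rewrite !mxE => <-.
by congr (v 0 _); apply: val_inj.
Qed.

End Cramer.


Lemma mem_sumn (j : nat) (s : seq nat) : j \in s -> (j <= sumn s)%N.
Proof.
elim: s => [|a s IH] //=; rewrite in_cons => /orP[/eqP ->|/IH h].
  exact: leq_addr.
exact: leq_trans h (leq_addl _ _).
Qed.

Lemma Qcap_ext (F : fieldType) (m : nat) (y y' : nat -> 'M[F]_m.+1) :
  (forall j, (j <= m.+1 * m.+1)%N -> y j = y' j) -> Qcap y = Qcap y'.
Proof.
move=> H; rewrite /Qcap; apply: eq_bigr => g _; rewrite H //; congr (_ *: (_ * _)).
by apply: eq_bigr => j _; rewrite H.
Qed.

Section Main.
Variables (F : fieldType) (m t : nat) (f : 'I_t.+1 -> ncpoly F).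
Local Notation n := m.+1.
Local Notation N := (n * n)%N.
Local Notation MM := 'M[F]_n.

Definition Bd := (\sum_(i < t.+1) sumn (flatten [seq mo.2 | mo <- f i])).+1.

Lemma Bd_fresh i (r r' : nat -> MM) :
  (forall j, (j < Bd)%N -> r j = r' j) -> nceval r (f i) = nceval r' (f i).
Proof.
move=> H; apply: nceval_ext => mo mof j jm; apply: H.
rewrite /Bd ltnS (bigD1 i) //=; apply: leq_trans (leq_addr _ _).
by apply: mem_sumn; apply/flatten_mapP; exists mo.
Qed.

Definition Sv (i : nat) (v : nat) : ncpoly F :=
  if (v < N)%N then
    (if v.+1 == i then f ord0 else if (v < t)%N then f (inord v.+1) else ncvar F (Bd + v))
  else ncvar F (Bd + v).

Definition cpoly (i : 'I_t.+1) : ncpoly F :=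
  ncscale (if i == ord0 then 1 else -1) (ncsubst (Sv i) (Kpoly F m)).

Definition kap (r : nat -> MM) : F :=
  n%:R * \tr (Qcap (fun j => r (Bd + (N + j))%N) *m r (Bd + (N + N.+1))%N).

Definition Amx (r : nat -> MM) (i : nat) : 'M[F]_N :=
  coordm (fun v => nceval r (Sv i v)).

Lemma eval_c r i :
  nceval r (cpoly i) = ((if i == ord0 then 1 else -1) * (kap r * \det (Amx r i)))%:M.
Proof.
rewrite /cpoly nceval_scale nceval_subst eval_Kpoly Kfun_scalar.
rewrite scale_scalar_mx /kap /Amx; congr ((_ * _)%:M).
rewrite (@Qcap_ext _ _ _ (fun j => r (Bd + (N + j))%N)); last first.
  by move=> j _; rewrite /Sv ltnNge leq_addr /= nceval_var.
rewrite /Sv ltnNge leq_addr /= nceval_var.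
by rewrite mulrAC.
Qed.


Lemma c_central i : central_poly n (cpoly i).
Proof. by move=> r; apply/is_scalar_mxP; eexists; exact: eval_c. Qed.

Lemma c_PI (tN : (t <= N)%N) : loc_lin_dep n f ->
  poly_identity n (ncsum (fun i => ncmul (cpoly i) (f i))).
Proof.
move=> Hdep r; rewrite nceval_sum.
have [mu [[i0 nz] dep]] := Hdep r.
pose a i := nceval r (f i).
pose A0 := Amx r 0.
have Ai (i' : 'I_t) : Amx r (lift ord0 i') = rowupd A0 (widen_ord tN i') (mxvec (a ord0)).
  apply/matrixP => v e; rewrite /Amx /rowupd !mxE /Sv (ltn_ord v) /=.
  have -> : (v.+1 == lift ord0 i' :> nat) = (v == widen_ord tN i').
    by rewrite /= /bump /= add1n eqSS.
  by case: (v == widen_ord tN i') => //; rewrite mxE.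
have rowA (i' : 'I_t) : row (widen_ord tN i') A0 = mxvec (a (lift ord0 i')).
  apply/rowP => e; rewrite !mxE /Sv /= (leq_trans (ltn_ord i') tN) (ltn_ord i') /=.
  congr (mxvec (nceval r (f _)) 0 e); apply: val_inj.
  by rewrite /= inordK // ltnS; exact: ltn_ord i'.
have dep' : mu ord0 *: mxvec (a ord0) +
    \sum_(i < t) mu (lift ord0 i) *: row (widen_ord tN i) A0 = 0.
  have := congr1 mxvec dep; rewrite linear_sum big_ord_recl /= linear0 => H.
  rewrite -[RHS]H linearZ; congr (_ + _).
  by apply: eq_bigr => i _; rewrite rowA linearZ.
have := @cramer_zero F _ _ tN _ _ _ (ex_intro _ i0 nz) dep'.
under eq_bigr do rewrite -Ai.
move=> cz; apply/eqP; rewrite -mxvec_eq0; apply/eqP.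
under eq_bigr do rewrite nceval_mul eval_c -mulmxE mul_scalar_mx.
rewrite big_ord_recl /= mul1r linearD /= [X in X + _]linearZ [X in _ + X]linear_sum /=.
under eq_bigr do rewrite linearZ /=.
have -> : \sum_(i < t) (-1 * (kap r * \det (Amx r (bump 0 i)))) *:
      mxvec (nceval r (f (lift ord0 i)))
    = - (kap r *: \sum_(i < t) \det (Amx r (lift ord0 i)) *: row (widen_ord tN i) A0).
  rewrite scaler_sumr -sumrN; apply: eq_bigr => i _.
  by rewrite rowA scalerA mulN1r scaleNr.
by rewrite -scalerA -scalerBr cz scaler0.
Qed.


Definition Umx (r0 : nat -> MM) : 'M[F]_(t, N) :=
  \matrix_(i < t) mxvec (nceval r0 (f (lift ord0 i))).

Lemma c0_nonPI (charF0 : [pchar F] =i pred0) (r0 : nat -> MM) (tN : (t <= N)%N) :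
  row_free (Umx r0) -> ~ poly_identity n (cpoly ord0).
Proof.
move=> rfU H.
pose E := row_ebase (Umx r0).
pose zr (w : nat) : MM := oapp (fun k : 'I_N => vec_mx (row k E)) 0 (insub w).
pose r1 v := if (v < Bd)%N then r0 v else if (v - Bd < N)%N then zr (v - Bd)%N
   else if (v - Bd <= N + N)%N then ystar F m (v - Bd - N)%N else 1.
have := H r1; rewrite eval_c eqxx mul1r => /matrixP /(_ 0 0); rewrite !mxE eqxx mulr1n.
have -> : kap r1 = n%:R.
  rewrite /kap (@Qcap_ext _ _ _ (ystar F m)); last first.
    move=> j jN; rewrite /r1 ltnNge leq_addr /= addKn ltnNge leq_addr /=.
    by rewrite leq_add2l jN addKn.
  rewrite Qcap_star /r1 ltnNge leq_addr /= addKn ltnNge leq_addr /=.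
  rewrite leq_add2l ltnn mulmx1 /mxtrace (bigD1 ord0) //= big1 ?addr0.
    by rewrite mxE !eqxx mulr1.
  by move=> i /negbTE ni; rewrite mxE ni.
move=> /eqP; rewrite mulf_eq0 => /orP[].
  by move/pcharf0P: charF0 => ->.
apply/negP; set A := Amx r1 0.
have -> : A = \matrix_(k < N) row k A by apply/matrixP => i j; rewrite !mxE.
apply: (completion (tp := tN) rfU).
  move=> i; apply/rowP => e; rewrite !mxE /Sv /= (leq_trans (ltn_ord i) tN) (ltn_ord i) /=.
  have -> : inord i.+1 = lift ord0 i :> 'I_t.+1.
    by apply: val_inj; rewrite /= inordK // ltnS; exact: ltn_ord i.
  congr (mxvec _ 0 e); apply: Bd_fresh => j jB.
  by rewrite /r1 jB.
move=> k kt; apply/rowP => e; rewrite !mxE /Sv (ltn_ord k) /= (negbTE kt) nceval_var.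
rewrite /r1 ltnNge leq_addr /= addKn (ltn_ord k) /zr.
by rewrite valK /= vec_mxK mxE.
Qed.

End Main.

End Helpers.
Import Helpers.

Theorem mainTheorem13 (F : fieldType) (charF0 : [pchar F] =i pred0)
  (n : nat) (n_gt0 : (0 < n)%N) (t : nat) (f : 'I_t.+1 -> ncpoly F) :
  loc_lin_dep n f ->
  loc_lin_indep n (fun i : 'I_t => f (lift ord0 i)) ->
  exists c : 'I_t.+1 -> ncpoly F,
    (forall i, central_poly n (c i)) /\
    ~ poly_identity n (c ord0) /\
    poly_identity n (ncsum (fun i => ncmul (c i) (f i))).
Proof.
case: n n_gt0 => // m _ Hdep Hind.
have [r0 indep] : exists r0 : nat -> 'M[F]_m.+1, forall a : 'I_t -> F,
    \sum_i a i *: nceval r0 (f (lift ord0 i)) = 0 -> forall i, a i = 0.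
  apply: NNPP => H; apply: Hind => r; apply: NNPP => H2; apply: H.
  exists r => a Ha i; apply: NNPP => ai; apply: H2; exists a; split => //.
  by exists i; apply/eqP.
have rfU : row_free (Umx f r0).
  apply: inj_row_free => v vU; apply/rowP => i; rewrite mxE.
  apply: (indep (fun i => v 0 i)) => //; apply/eqP; rewrite -mxvec_eq0.
  rewrite linear_sum; apply/eqP; rewrite -[RHS]vU mulmx_sum_row; apply: eq_bigr => j _.
  by rewrite linearZ; congr (_ *: _); apply/rowP => e; rewrite !mxE.
have tN : (t <= m.+1 * m.+1)%N by have := rank_leq_col (Umx f r0); rewrite (eqP rfU).
exists (cpoly m f); split; first exact: c_central.
split; first exact: (c0_nonPI charF0 tN rfU).
exact: c_PI tN Hdep.
Qed.
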